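(* Let $k\ge 3$, $\varepsilon\in[0,\tfrac12)$, let $b=(b_0,\dots,b_{k-1})$ be the counterclockwise vertices of a convex polygon (consecutive collinear vertices allowed), and let $b^+=\Phi_\varepsilon(b)$. For each $j\in\{0,\dots,k-1\}$ let $Q_j$ be the quadrilateral with corners $b_j, b_{j+1}, b^+_{j+1}, b^+_j$ in this cyclic order (indices mod $k$). Then no $Q_j$ is twisted (its boundary is not self-intersecting, i.e. the side $\overline{b_jb_{j+1}}$ does not cross the side $\overline{b^+_{j+1}b^+_j}$ and the side $\overline{b_{j+1}b^+_{j+1}}$ does not cross the side $\overline{b^+_jb_j}$ at a single interior point), and for $j\ne j'$ the quadrilaterals $Q_j$ and $Q_{j'}$ do not overlap (their interiors are disjoint).
   Context: The $\varepsilon$-GtM step is the map $\Phi_\varepsilon\colon(\mathbb{R}^2)^k\to(\mathbb{R}^2)^k$, $(b_0,\dots,b_{k-1})\mapsto(b_0^+,\dots,b_{k-1}^+)$ with $b_j^+=\varepsilon\frac{b_{j-1}+b_{j+1}}{2}+(1-\varepsilon)b_j$, indices modulo $k$. The quadrilaterals $Q_j$ are called wave-segments; together they partition the region between the polygon $b$ and the polygon $b^+$. *)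

(* Defs.v *)
From mathcomp Require Import all_boot all_order all_algebra.
Set Implicit Arguments. Unset Strict Implicit. Unset Printing Implicit Defensive.
Import Order.TTheory GRing.Theory Num.Theory.
Local Open Scope ring_scope.

Section Geom.
Variable R : realFieldType.
Notation pt := (R * R)%type.

(* Twice the signed area of the triangle (p, q, r): > 0 iff counterclockwise. *)
Definition orient (p q r : pt) : R :=
  (q.1 - p.1) * (r.2 - p.2) - (q.2 - p.2) * (r.1 - p.1).

Definition on_seg (p q x : pt) : Prop :=
  exists t : R, 0 <= t <= 1 /\ x = (p.1 + t * (q.1 - p.1), p.2 + t * (q.2 - p.2)).

(* The open segments (p,q) and (r,s) cross at a single point interior to both. *)
Definition proper_cross (p q r s : pt) : Prop :=
  orient p q r * orient p q s < 0 /\ orient r s p * orient r s q < 0.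

Definition twisted (a b c d : pt) : Prop :=
  proper_cross a b c d \/ proper_cross b c d a.

(* Signed crossing contribution of the directed edge p -> q to the winding
   number around x (horizontal ray to the right, half-open convention). *)
Definition wind_edge (p q x : pt) : int :=
  if (p.2 <= x.2) && (x.2 < q.2) && (0 < orient p q x) then 1
  else if (q.2 <= x.2) && (x.2 < p.2) && (orient p q x < 0) then -1
  else 0.

(* Winding number of the closed quadrilateral a -> b -> c -> d -> a around x
   (meaningful for x off the boundary). *)
Definition wind_quad (a b c d x : pt) : int :=
  wind_edge a b x + wind_edge b c x + wind_edge c d x + wind_edge d a x.

Definition on_quad_boundary (a b c d x : pt) : Prop :=
  on_seg a b x \/ on_seg b c x \/ on_seg c d x \/ on_seg d a x.

Definition quad_interior (a b c d x : pt) : Prop :=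
  ~ on_quad_boundary a b c d x /\ wind_quad a b c d x != 0.

(* b_0,...,b_{k-1} are the counterclockwise vertices of a convex polygon,
   consecutive collinear vertices allowed: vertices pairwise distinct, every
   vertex weakly to the left of every directed edge b_i b_{i+1}, and the polygon
   has nonempty interior (some strictly counterclockwise triple). *)
Definition convex_ccw (k : nat) (b : 'I_k -> pt) : Prop :=
  injective b /\
  (forall i j : 'I_k, 0 <= orient (b i) (b (ordS i)) (b j)) /\
  (exists i j l : 'I_k, 0 < orient (b i) (b j) (b l)).

Definition Phi (eps : R) (k : nat) (b : 'I_k -> pt) : 'I_k -> pt :=
  fun j =>
    (eps * ((b (ord_pred j)).1 + (b (ordS j)).1) / 2 + (1 - eps) * (b j).1,
     eps * ((b (ord_pred j)).2 + (b (ordS j)).2) / 2 + (1 - eps) * (b j).2).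

End Geom.

(* Main.v *)
Require Import Defs.
From mathcomp Require Import all_boot all_order all_algebra.
From mathcomp Require Import ring lra zify.
Set Implicit Arguments. Unset Strict Implicit. Unset Printing Implicit Defensive.
Import Order.TTheory GRing.Theory Num.Theory.
Local Open Scope ring_scope.
Section W.
Variable R : realFieldType.
Notation pt := (R * R)%type.
Implicit Types p q r s x : pt.

Lemma claim1 p q r x : q.2 <= x.2 -> x.2 < p.2 -> x.2 < r.2 ->
  orient p q x < 0 -> 0 <= orient p q r -> 0 < orient q r x.
Proof.
move=> h1 h2 h3 h4 h5.
have E1 : (r.2-x.2)*orient p q x + (p.2 - x.2)*orient q r x + (q.2-x.2)*orient r p x = 0
  by rewrite /orient; ring.
have E2 : orient p q r = orient p q x + orient q r x + orient r p x by rewrite /orient; ring.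
move: E1 E2 h4 h5; set A := orient p q x; set B := orient q r x; set C := orient r p x.
move=> E1 E2 h4 h5.
set a := r.2 - x.2. set b := p.2 - x.2. set c := x.2 - q.2.
have ha : 0 < a by rewrite subr_gt0.
have hb : 0 < b by rewrite subr_gt0.
have hc : 0 <= c by rewrite subr_ge0.
have E1' : a * A + b * B - c * C = 0 by rewrite -E1 /a/b/c; ring.
nra.
Qed.

Lemma claim2 p q r x : q.2 <= x.2 -> x.2 < p.2 -> r.2 <= x.2 ->
  orient p q x < 0 -> 0 <= orient p q r -> 0 < orient r p x.
Proof.
move=> h1 h2 h3 h4 h5.
have E1 : (r.2-x.2)*orient p q x + (p.2 - x.2)*orient q r x + (q.2-x.2)*orient r p x = 0
  by rewrite /orient; ring.
have E2 : orient p q r = orient p q x + orient q r x + orient r p x by rewrite /orient; ring.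
move: E1 E2 h4 h5; set A := orient p q x; set B := orient q r x; set C := orient r p x.
move=> E1 E2 h4 h5.
set a := x.2 - r.2. set b := p.2 - x.2. set c := x.2 - q.2.
have ha : 0 <= a by rewrite subr_ge0.
have hb : 0 < b by rewrite subr_gt0.
have hc : 0 <= c by rewrite subr_ge0.
have E1' : - a * A + b * B - c * C = 0 by rewrite -E1 /a/b/c; ring.
nra.
Qed.

Lemma we_anti p q x : wind_edge q p x = - wind_edge p q x.
Proof.
rewrite /wind_edge.
have -> : orient q p x = - orient p q x by rewrite /orient; ring.
rewrite oppr_gt0 oppr_lt0.
case: (lerP p.2 x.2) => h1; case: (ltrP x.2 q.2) => h2;
case: (lerP q.2 x.2) => h3; case: (ltrP x.2 p.2) => h4;
case: (ltrgtP (orient p q x) 0) => h5 /=; try lra.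
Qed.

Lemma we_m1 p q x : wind_edge p q x = -1 -> q.2 <= x.2 /\ x.2 < p.2 /\ orient p q x < 0.
Proof.
rewrite /wind_edge.
case: (lerP p.2 x.2) => h1; case: (ltrP x.2 q.2) => h2;
case: (lerP q.2 x.2) => h3; case: (ltrP x.2 p.2) => h4;
case: (ltrgtP (orient p q x) 0) => h5 //=; lra.
Qed.

Lemma we_1 p q x : p.2 <= x.2 -> x.2 < q.2 -> 0 < orient p q x -> wind_edge p q x = 1.
Proof. by rewrite /wind_edge => -> -> ->. Qed.

Lemma we_0a p q x : x.2 < p.2 -> x.2 < q.2 -> wind_edge p q x = 0.
Proof.
rewrite /wind_edge => h1 h2.
by rewrite (lt_geF h1) (lt_geF h2).
Qed.

Lemma we_0b p q x : p.2 <= x.2 -> q.2 <= x.2 -> wind_edge p q x = 0.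
Proof.
rewrite /wind_edge => h1 h2.
by rewrite (le_gtF h1) (le_gtF h2) !andbF.
Qed.

Lemma we_ge p q x : -1 <= wind_edge p q x <= 1.
Proof. by rewrite /wind_edge; case: ifP => _ //; case: ifP. Qed.

Lemma we_neg p q x : wind_edge p q x < 0 -> wind_edge p q x = -1.
Proof. by rewrite /wind_edge; case: ifP => _ //; case: ifP. Qed.

Definition tri p q r x : int := wind_edge p q x + wind_edge q r x + wind_edge r p x.

Lemma tri_m1 p q r x : wind_edge p q x = -1 -> 0 <= orient p q r ->
  wind_edge q r x + wind_edge r p x = 1.
Proof.
move=> /we_m1 [h1 [h2 h3]] h4.
case: (ltrP x.2 r.2) => h5.
  rewrite (we_1 h1 h5 (claim1 h1 h2 h5 h3 h4)) (we_0a h5 h2) //.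
rewrite (we_1 h5 h2 (claim2 h1 h2 h5 h3 h4)) (we_0b h1 h5) //.
Qed.

Lemma orient_rot p q r : orient p q r = orient q r p.
Proof. rewrite /orient; ring. Qed.

Lemma tri_ge0 p q r x : 0 <= orient p q r -> 0 <= tri p q r x.
Proof.
move=> h; rewrite /tri.
have h' := h; rewrite orient_rot in h'.
have h'' := h'; rewrite orient_rot in h''.
case: (ltrP (wind_edge p q x) 0) => [/we_neg e|h1].
  by have := tri_m1 e h; lra.
case: (ltrP (wind_edge q r x) 0) => [/we_neg e|h2].
  by have := tri_m1 e h'; lra.
case: (ltrP (wind_edge r p x) 0) => [/we_neg e|h3].
  by have := tri_m1 e h''; lra.
lra.
Qed.

Definition ind (b : bool) : int := if b then 1 else 0.

Lemma zord p q r s x : x.2 < p.2 -> q.2 <= x.2 -> orient p q x < 0 ->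
  r.2 <= x.2 -> x.2 < s.2 -> 0 <= orient r s p -> 0 <= orient r s q ->
  0 < orient r s x.
Proof.
move=> h1 h2 h3 h4 h5 h6 h7.
have E : (p.2-q.2) * orient r s x = (p.2-x.2) * orient r s q + (x.2-q.2) * orient r s p
   - (s.2-r.2) * orient p q x by rewrite /orient; ring.
move: E; set A := orient r s x; set B := orient r s q; set C := orient r s p;
  set D := orient p q x => E.
set a := p.2 - x.2. set c := x.2 - q.2. set d := s.2 - r.2.
have ha : 0 < a by rewrite subr_gt0.
have hc : 0 <= c by rewrite subr_ge0.
have hd : 0 < d by rewrite /d; lra.
have E' : (a + c) * A = a * B + c * C - d * D by rewrite /a/c/d/A/B/C/D /orient; ring.
have p1 : 0 <= a * B by rewrite mulr_ge0 // ltW.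
have p2 : 0 <= c * C by rewrite mulr_ge0.
have p3 : 0 < - (d * D) by rewrite oppr_gt0 pmulr_rlt0.
rewrite ltNge; apply/negP => hA.
have : (a + c) * A <= 0 by rewrite pmulr_rle0 //; lra.
lra.
Qed.

Section Poly.
Variable k : nat.
Implicit Types P : 'I_k -> pt.

Definition Wn P x : int := \sum_(j < k) wind_edge (P j) (P (ordS j)) x.

Lemma sum_ordS (F : 'I_k -> int) : \sum_(j < k) F (ordS j) = \sum_(j < k) F j.
Proof. exact: (esym (reindex_inj (@ordS_inj k))). Qed.

Lemma tel_UD P x :
  \sum_(j < k) (ind (((P j).2 <= x.2) && (x.2 < (P (ordS j)).2))
              - ind (((P (ordS j)).2 <= x.2) && (x.2 < (P j).2))) = 0.
Proof.
have -> : \sum_(j < k) (ind (((P j).2 <= x.2) && (x.2 < (P (ordS j)).2))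
              - ind (((P (ordS j)).2 <= x.2) && (x.2 < (P j).2)))
  = \sum_(j < k) (ind (x.2 < (P (ordS j)).2) - ind (x.2 < (P j).2)).
  apply: eq_bigr => j _; rewrite /ind.
  case: (lerP (P j).2 x.2) => h1; case: (ltrP x.2 (P (ordS j)).2) => h2 //=.
rewrite sumrB (sum_ordS (fun j => ind (x.2 < (P j).2))); exact: subrr.
Qed.

Lemma Wn_ge0 P x : (forall j m, 0 <= orient (P j) (P (ordS j)) (P m)) -> 0 <= Wn P x.
Proof.
move=> hc; rewrite /Wn.
case: (pickP (fun d => [&& (P (ordS d)).2 <= x.2, x.2 < (P d).2 &
                            orient (P d) (P (ordS d)) x < 0])) => [d /and3P [d1 d2 d3]| hn].
  rewrite -[X in X <= _](tel_UD P x); apply: ler_sum => j _ /=.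
  case: (lerP (P j).2 x.2) => h1; case: (ltrP x.2 (P (ordS j)).2) => h2 /=;
   [ rewrite (we_1 h1 h2 (zord d2 d1 d3 h1 h2 (hc _ _) (hc _ _))) /ind /= ?andbF; lra
   | case: (ltrP (wind_edge (P j) (P (ordS j)) x) 0) => [/we_neg e|ge];
     [ have [e1 [e2 e3]] := we_m1 e; rewrite /ind; (repeat case: ifP => _); rewrite ?e; lra
     | rewrite /ind; (repeat case: ifP => _); lra ] .. ].
apply: sumr_ge0 => j _.
case: (ltrP (wind_edge (P j) (P (ordS j)) x) 0) => // /we_neg e.
have [e1 [e2 e3]] := we_m1 e.
by move: (hn j); rewrite e1 e2 e3.
Qed.
End Poly.
End W.

Section W.
Variable R : realFieldType.
Notation pt := (R * R)%type.
Implicit Types p q r s x : pt.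
Definition pos (u0 w0 : pt) (s : R) : pt :=
  (u0.1 + s * (w0.1 - u0.1), u0.2 + s * (w0.2 - u0.2)).

Lemma orient_pos u0 w0 a c X :
  orient (pos u0 w0 a) (pos u0 w0 c) X = (c - a) * orient u0 w0 X.
Proof. rewrite /orient /pos /=; ring. Qed.

Lemma orient_pos2 u0 w0 a : orient u0 w0 (pos u0 w0 a) = 0.
Proof. rewrite /orient /pos /=; ring. Qed.

Lemma pos0 u0 w0 : pos u0 w0 0 = u0.
Proof. by case: u0 => a b; rewrite /pos /= !mul0r !addr0. Qed.

Lemma pos1 u0 w0 : pos u0 w0 1 = w0.
Proof. case: u0 => a b; case: w0 => c d; rewrite /pos /=; congr (_, _); ring. Qed.

Lemma sqsum_gt0 (a c : R) : (a != 0) || (c != 0) -> 0 < a * a + c * c.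
Proof.
move=> h.
have h1 : 0 <= a * a by rewrite -expr2 sqr_ge0.
have h2 : 0 <= c * c by rewrite -expr2 sqr_ge0.
rewrite lt_def paddr_eq0 // !mulf_eq0 !orbb negb_and h /=.
by apply: addr_ge0.
Qed.

Lemma neq_pt (u0 w0 : pt) : u0 <> w0 -> (w0.1 - u0.1 != 0) || (w0.2 - u0.2 != 0).
Proof.
case: u0 => a b; case: w0 => c d /= hne.
rewrite !subr_eq0.
case: eqP => [e1|] //=; case: eqP => [e2|] //=.
by case: hne; rewrite e1 e2.
Qed.

Definition prm (u0 w0 x : pt) : R :=
  ((w0.1-u0.1)*(x.1-u0.1) + (w0.2-u0.2)*(x.2-u0.2)) /
  ((w0.1-u0.1)*(w0.1-u0.1) + (w0.2-u0.2)*(w0.2-u0.2)).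

Lemma prm_pos u0 w0 a : u0 <> w0 -> prm u0 w0 (pos u0 w0 a) = a.
Proof.
move=> /neq_pt /sqsum_gt0 h; rewrite /prm /pos /=.
have hn : (w0.1 - u0.1) * (w0.1 - u0.1) + (w0.2 - u0.2) * (w0.2 - u0.2) != 0 by rewrite gt_eqF.
apply: (mulIf hn); rewrite mulfVK //; ring.
Qed.

Lemma onL_pos u0 w0 x : u0 <> w0 -> orient u0 w0 x = 0 -> x = pos u0 w0 (prm u0 w0 x).
Proof.
move=> /neq_pt /sqsum_gt0 h; rewrite /orient => ho.
have hn : (w0.1 - u0.1) * (w0.1 - u0.1) + (w0.2 - u0.2) * (w0.2 - u0.2) != 0 by rewrite gt_eqF.
case: x ho => x1 x2 /= ho; rewrite /pos /prm /=.
set N := (w0.1 - u0.1) * (w0.1 - u0.1) + (w0.2 - u0.2) * (w0.2 - u0.2).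
set M := (w0.1 - u0.1) * (x1 - u0.1) + (w0.2 - u0.2) * (x2 - u0.2).
have E1 : (x1 - u0.1) * N = M * (w0.1 - u0.1) - (w0.2 - u0.2) * ((w0.1 - u0.1) * (x2 - u0.2) - (w0.2 - u0.2) * (x1 - u0.1)) by rewrite /N /M; ring.
have E2 : (x2 - u0.2) * N = M * (w0.2 - u0.2) + (w0.1 - u0.1) * ((w0.1 - u0.1) * (x2 - u0.2) - (w0.2 - u0.2) * (x1 - u0.1)) by rewrite /N /M; ring.
rewrite ho !mulr0 ?subr0 ?addr0 in E1 E2.
congr (_, _).
- have -> : x1 = u0.1 + (x1 - u0.1) by ring.
  congr (_ + _); apply: (mulIf hn); rewrite E1 mulrAC mulfVK //.
- have -> : x2 = u0.2 + (x2 - u0.2) by ring.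
  congr (_ + _); apply: (mulIf hn); rewrite E2 mulrAC mulfVK //.
Qed.

Lemma pos_inj u0 w0 a c : u0 <> w0 -> pos u0 w0 a = pos u0 w0 c -> a = c.
Proof. by move=> h e; rewrite -(prm_pos a h) e prm_pos. Qed.
End W.

Section W.
Variable R : realFieldType.
Notation pt := (R * R)%type.
Implicit Types p q r s x : pt.
Lemma col3 (u w A B C : pt) : u <> w -> orient u w A = 0 -> orient u w B = 0 ->
  orient u w C = 0 -> orient A B C = 0.
Proof.
move=> hne ha hb hc.
have E1 : (w.1 - u.1) * orient A B C = (B.1 - A.1)*(orient u w C - orient u w A)
   - (C.1 - A.1)*(orient u w B - orient u w A) by rewrite /orient; ring.
have E2 : (w.2 - u.2) * orient A B C = (B.2 - A.2)*(orient u w C - orient u w A)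
   - (C.2 - A.2)*(orient u w B - orient u w A) by rewrite /orient; ring.
rewrite ha hb hc !subrr !mulr0 subrr in E1 E2.
apply/eqP; apply: contraT => hn.
move: (neq_pt hne); rewrite -[_ != 0]negbK.
move/eqP: E1; rewrite mulf_eq0 (negbTE hn) orbF => ->.
by move/eqP: E2; rewrite mulf_eq0 (negbTE hn) orbF => ->.
Qed.

Lemma pos_pos (u w : pt) (a c t : R) :
  pos (pos u w a) (pos u w c) t = pos u w (a + t * (c - a)).
Proof. rewrite /pos /=; congr (_, _); ring. Qed.

Lemma nl1 (k : nat) : (2 < k)%N -> (2 <= k.-1 <= k)%N. Proof. lia. Qed.
Lemma nl2 (d : nat) : (3 <= d)%N -> (0 < d)%N. Proof. lia. Qed.
Lemma nl3 (d k : nat) : (3 <= d)%N -> (d <= k)%N -> (2 <= d.-1 <= k)%N. Proof. lia. Qed.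
Lemma nl4 (d : nat) : d <> 1%N -> d <> 2%N -> d = 0%N \/ (3 <= d)%N. Proof. lia. Qed.

Lemma or_aba (p q : pt) : orient p q p = 0.
Proof. by rewrite /orient !subrr !mulr0 subrr. Qed.
Lemma or_aab (p q : pt) : orient p p q = 0.
Proof. by rewrite /orient !subrr !mul0r subrr. Qed.
Lemma or_abb (p q : pt) : orient p q q = 0.
Proof. by rewrite /orient mulrC subrr. Qed.

Section Conv.
Variable k : nat.
Hypothesis hk : (2 < k)%N.
Variable b : 'I_k -> pt.
Hypothesis binj : injective b.
Hypothesis hE : forall i j : 'I_k, 0 <= orient (b i) (b (ordS i)) (b j).
Hypothesis hS : exists i j l : 'I_k, 0 < orient (b i) (b j) (b l).

Lemma ordS_neq (i : 'I_k) : ordS i <> i.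
Proof.
move=> /(congr1 val) /=.
have hi := ltn_ord i.
case: (ltnP i.+1 k) => h.
  by rewrite modn_small // => /eqP; rewrite eqn_leq ltnn.
have -> : i.+1 = k by apply/eqP; rewrite eqn_leq h hi.
rewrite modnn => e.
move: hk h; rewrite -e; lia.
Qed.

Lemma allcol u w : u <> w -> (forall X, orient u w (b X) = 0) -> False.
Proof.
move=> hne hX; case: hS => i [j [l hl]].
set A := b i; set B := b j; set C := b l.
have E1 : (w.1 - u.1) * orient A B C = (B.1 - A.1)*(orient u w C - orient u w A)
   - (C.1 - A.1)*(orient u w B - orient u w A) by rewrite /orient; ring.
have E2 : (w.2 - u.2) * orient A B C = (B.2 - A.2)*(orient u w C - orient u w A)
   - (C.2 - A.2)*(orient u w B - orient u w A) by rewrite /orient; ring.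
rewrite !hX !subrr !mulr0 subrr in E1 E2.
move: (neq_pt hne); rewrite -[_ != 0]negbK.
move/eqP: E1; rewrite mulf_eq0 (gt_eqF hl) orbF => ->.
by move/eqP: E2; rewrite mulf_eq0 (gt_eqF hl) orbF => ->.
Qed.

Definition Nc u0 w0 (t : 'I_k) :=
  #|[set t' | (orient u0 w0 (b t') == 0) && (prm u0 w0 (b t') < prm u0 w0 (b t))]|.

Lemma Nc_lt u0 w0 t t' : orient u0 w0 (b t') = 0 -> prm u0 w0 (b t') < prm u0 w0 (b t) ->
  (Nc u0 w0 t' < Nc u0 w0 t)%N.
Proof.
move=> h1 h2; apply: proper_card; apply/properP; split.
  apply/subsetP => y; rewrite !inE => /andP [-> h3] /=.
  exact: lt_trans h3 h2.
by exists t'; rewrite !inE ?h1 ?eqxx ?h2 ?ltxx.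
Qed.

Lemma Rgen u0 w0 : u0 <> w0 -> forall n t j su sw sv, (Nc u0 w0 t < n)%N ->
  b j = pos u0 w0 su -> b (ordS j) = pos u0 w0 sw -> b t = pos u0 w0 sv ->
  su < sv -> sv < sw -> False.
Proof.
move=> hne; elim=> [//|n IH] t j su sw sv hN hj hj1 ht h1 h2.
set tp := ord_pred t.
have etp : ordS tp = t := ord_predK t.
have o1 := hE tp j; have o2 := hE tp (ordS j).
rewrite etp ht hj in o1; rewrite etp ht hj1 in o2.
have E : (sw - sv) * orient (b tp) (pos u0 w0 sv) (pos u0 w0 su)
   + (sv - su) * orient (b tp) (pos u0 w0 sv) (pos u0 w0 sw) = 0
  by rewrite /orient /pos /=; ring.
have O1 : orient (b tp) (pos u0 w0 sv) (pos u0 w0 su) = 0.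
  have q1 : 0 <= (sw - sv) * orient (b tp) (pos u0 w0 sv) (pos u0 w0 su)
    by rewrite mulr_ge0 // subr_ge0 ltW.
  have q2 : 0 <= (sv - su) * orient (b tp) (pos u0 w0 sv) (pos u0 w0 sw)
    by rewrite mulr_ge0 // subr_ge0 ltW.
  have : (sw - sv) * orient (b tp) (pos u0 w0 sv) (pos u0 w0 su) = 0 by lra.
  move/eqP; rewrite mulf_eq0 subr_eq0 (gt_eqF h2) /= => /eqP //.
have hp : orient u0 w0 (b tp) = 0.
  move: O1; rewrite orient_rot orient_pos => /eqP; rewrite mulf_eq0 subr_eq0 (lt_eqF h1) /=.
  by move/eqP.
set sp := prm u0 w0 (b tp).
have ep : b tp = pos u0 w0 sp := onL_pos hne hp.
have hNt : forall t', orient u0 w0 (b t') = 0 -> prm u0 w0 (b t') < sv -> (Nc u0 w0 t' < n)%N.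
  move=> t' a1 a2; have := Nc_lt a1 (_ : _ < prm u0 w0 (b t)).
  rewrite ht prm_pos // => /(_ a2) a3.
  by apply: leq_trans a3 _; rewrite -ltnS.
case: (ltrgtP sp sv) => hsp.
- case: (ltrgtP sp su) => hsu.
  + apply: (IH j tp sp sv su) => //.
    * apply: hNt; first by rewrite hj orient_pos2.
      by rewrite hj prm_pos.
    * by rewrite etp.
  + apply: (IH tp j su sw sp) => //.
      by apply: hNt.
    exact: lt_trans hsp h2.
  + have ej : tp = j by apply: binj; rewrite ep hj hsu.
    have : pos u0 w0 sv = pos u0 w0 sw by rewrite -ht -hj1 -ej etp.
    move/(pos_inj hne) => e; move: h2; rewrite e ltxx //.
- apply: (allcol hne) => X.
  have a1 := hE tp X; have a2 := hE j X.
  rewrite etp ep ht orient_pos in a1.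
  rewrite hj hj1 orient_pos in a2.
  have a3 : 0 < sw - su by rewrite subr_gt0; exact: lt_trans h1 h2.
  have a4 : sv - sp < 0 by rewrite subr_lt0.
  rewrite pmulr_rge0 // in a2.
  rewrite nmulr_rge0 // in a1.
  by apply/eqP; rewrite eq_le a1 a2.
- have : tp = t by apply: binj; rewrite ep ht hsp.
  by move=> e; apply: (@ordS_neq t); rewrite -{1}e etp.
Qed.

Lemma Rlem t j tau : 0 < tau -> tau < 1 -> b t = pos (b j) (b (ordS j)) tau -> False.
Proof.
move=> h1 h2 ht.
have hne : b j <> b (ordS j) by move/binj => e; apply: (@ordS_neq j); rewrite -e.
apply: (Rgen hne (n := (Nc (b j) (b (ordS j)) t).+1) (t := t) (j := j) (su := 0) (sw := 1) (sv := tau)) => //.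
- by rewrite pos0.
- by rewrite pos1.
Qed.

Lemma uniqU i l h : (b i).2 <= h -> h < (b (ordS i)).2 -> (b l).2 <= h ->
  h < (b (ordS l)).2 -> i = l.
Proof.
move=> hp hq hr hs.
have A1 := hE i l; have A2 := hE i (ordS l); have B1 := hE l i; have B2 := hE l (ordS i).
move: hp hq hr hs A1 A2 B1 B2.
have hpq : b i <> b (ordS i) by move/binj => e; apply: (@ordS_neq i); rewrite -e.
have hrs : b l <> b (ordS l) by move/binj => e; apply: (@ordS_neq l); rewrite -e.
move: hpq hrs.
set p := b i; set q := b (ordS i); set r := b l; set s := b (ordS l).
move=> hpq hrs hp hq hr hs A1 A2 B1 B2.
have E : (s.2-h)*orient p q r + (h-r.2)*orient p q s + (q.2-h)*orient r s p
   + (h-p.2)*orient r s q = 0 by rewrite /orient; ring.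
have t1 : 0 <= (s.2-h)*orient p q r by rewrite mulr_ge0 // subr_ge0 ltW.
have t2 : 0 <= (h-r.2)*orient p q s by rewrite mulr_ge0 // subr_ge0.
have t3 : 0 <= (q.2-h)*orient r s p by rewrite mulr_ge0 // subr_ge0 ltW.
have t4 : 0 <= (h-p.2)*orient r s q by rewrite mulr_ge0 // subr_ge0.
have z1 : orient p q r = 0.
  have : (s.2-h)*orient p q r = 0 by lra.
  by move/eqP; rewrite mulf_eq0 subr_eq0 (gt_eqF hs) /= => /eqP.
have z3 : orient r s p = 0.
  have : (q.2-h)*orient r s p = 0 by lra.
  by move/eqP; rewrite mulf_eq0 subr_eq0 (gt_eqF hq) /= => /eqP.
have z2 : (h-r.2)*orient p q s = 0 by lra.
have z4 : (h-p.2)*orient r s q = 0 by lra.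
have hD : 0 < q.2 - p.2 by rewrite subr_gt0; exact: le_lt_trans hp hq.
case: (eqVneq (orient p q s) 0) => ha2.
-
  have er := onL_pos hpq z1; have es := onL_pos hpq ha2.
  set sr := prm p q r in er; set ss := prm p q s in es.
  have y2 : forall a, (pos p q a).2 = p.2 + a * (q.2 - p.2) by [].
  have hss : 0 < ss.
    have : p.2 < s.2 by exact: le_lt_trans hp hs.
    rewrite es y2 -subr_gt0 addrC addKr pmulr_lgt0 //.
  case: (ltrgtP sr 0) => hsr.
  + exfalso; apply: (@Rlem i l (- sr / (ss - sr))).
    * by rewrite divr_gt0 // ?oppr_gt0 // subr_gt0 (lt_trans hsr hss).
    * rewrite ltr_pdivrMr ?mul1r ?subr_gt0 ?(lt_trans hsr hss) //; lra.
    * rewrite -/r -/s er es pos_pos -/p.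
      have hn : ss - sr != 0 by rewrite subr_eq0 gt_eqF // (lt_trans hsr hss).
      have -> : sr + - sr / (ss - sr) * (ss - sr) = 0 by rewrite mulfVK // subrr.
      by rewrite pos0.
  + exfalso; apply: (@Rlem l i sr) => //.
    have : r.2 < q.2 by exact: le_lt_trans hr hq.
    rewrite er y2 -subr_gt0 => hh.
    have : 0 < (1 - sr) * (q.2 - p.2).
      by have -> : (1 - sr) * (q.2 - p.2) = q.2 - (p.2 + sr * (q.2 - p.2)) by ring.
    by rewrite pmulr_lgt0 // subr_gt0.
  + by apply: binj; rewrite -/p -/r er hsr pos0.
- have hr2 : r.2 = h.
    move/eqP: z2; rewrite mulf_eq0 (negbTE ha2) orbF subr_eq0 => /eqP //.
  have hb2 : orient r s q != 0.
    apply/eqP => hb2; apply: (negP ha2); apply/eqP.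
    apply: (col3 hrs) => //; rewrite /orient; ring.
  have hp2 : p.2 = h.
    move/eqP: z4; rewrite mulf_eq0 (negbTE hb2) orbF subr_eq0 => /eqP //.
  apply: binj; rewrite -/p -/r.
  move: z1; rewrite /orient hr2 hp2 subrr mulr0 sub0r => /eqP.
  have hD' : q.2 - h != 0 by rewrite subr_eq0 gt_eqF.
  rewrite oppr_eq0 mulf_eq0 (negbTE hD') /= subr_eq0 => /eqP e1.
  by rewrite [p]surjective_pairing [r]surjective_pairing e1 hr2 hp2.
Qed.

Lemma we_le_indU p q x : wind_edge p q x <= ind ((p.2 <= x.2) && (x.2 < q.2)).
Proof.
rewrite /wind_edge /ind; case: ifP => [/andP [/andP [-> ->] _] //|_].
by case: ifP => _ //; case: ifP.
Qed.

Lemma Wb_le1 x : Wn b x <= 1.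
Proof.
apply: (@le_trans _ _ (\sum_(j < k) ind (((b j).2 <= x.2) && (x.2 < (b (ordS j)).2)))).
  by apply: ler_sum => j _; apply: we_le_indU.
case: (pickP (fun j => ((b j).2 <= x.2) && (x.2 < (b (ordS j)).2))) => [i /andP [h1 h2]|hn].
  rewrite (bigD1 i) //= big1 ?addr0; first by rewrite /ind h1 h2.
  move=> j hj; rewrite /ind; case: ifP => // /andP [h3 h4].
  by move: hj; rewrite (uniqU h1 h2 h3 h4) eqxx.
by rewrite big1 // => j _; rewrite /ind hn.
Qed.


Lemma kpos : (0 < k)%N. Proof. by apply: leq_trans hk. Qed.

Definition shift (i : 'I_k) (m : nat) : 'I_k := Ordinal (ltn_pmod (i + m) kpos).

Lemma shift_ordS i m : ordS (shift i m) = shift i m.+1.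
Proof. apply: val_inj => /=; by rewrite -addn1 modnDml addn1 addnS. Qed.

Lemma shift0 i : shift i 0 = i.
Proof. by apply: val_inj => /=; rewrite addn0 modn_small. Qed.

Lemma shiftk i : shift i k = i.
Proof. by apply: val_inj => /=; rewrite modnDr modn_small. Qed.

Lemma shift_shift i a c : shift (shift i a) c = shift i (a + c).
Proof. by apply: val_inj => /=; rewrite modnDml addnA. Qed.

Lemma shift1 i : shift i 1 = ordS i.
Proof. by rewrite -shift_ordS shift0. Qed.

Lemma shift_pred i m : ord_pred (shift i m.+1) = shift i m.
Proof. by rewrite -shift_ordS ordSK. Qed.

Lemma shift_all i j : exists2 d, (d < k)%N & j = shift i d.
Proof.
exists ((j + (k - i)) %% k)%N; first exact: ltn_pmod _ kpos.
apply: val_inj => /=; rewrite modnDmr.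
have hi := ltn_ord i; have hj := ltn_ord j.
have -> : (i + (j + (k - i)) = j + k)%N by lia.
by rewrite modnDr modn_small.
Qed.

Lemma shift_neq i d : (0 < d < k)%N -> shift i d <> i.
Proof.
move=> /andP [h1 h2] /(congr1 val) /=.
have hi := ltn_ord i.
case: (ltnP (i + d) k) => h.
  rewrite modn_small //; lia.
have -> : (i + d = (i + d - k) + k)%N by lia.
rewrite modnDr modn_small; lia.
Qed.

Lemma bneq (i j : 'I_k) : i <> j -> b i <> b j.
Proof. by move=> h /binj. Qed.

Definition behind i X := orient (b i) (b (ordS i)) X = 0 /\ prm (b i) (b (ordS i)) X < 0.
Definition ahead i X := orient (b i) (b (ordS i)) X = 0 /\ 0 < prm (b i) (b (ordS i)) X.

Lemma CLstep i n : (1 <= n)%N -> (n < k)%N -> forall m, (1 <= m <= n)%N ->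
  (0 <= orient (b i) (b (shift i m)) (b (shift i n))) /\ ~ (behind i (b (shift i m)) /\ ahead i (b (shift i n))).
Proof.
have hne : b i <> b (ordS i) by apply: bneq => e; move: (@ordS_neq i); rewrite -e.
elim: n => [//|n IH] _ hn1 m /andP [hm1 hmn].
have htriv : forall X, (0 <= orient (b i) X X) /\ ~ (behind i X /\ ahead i X).
  move=> X; split; first by rewrite /orient mulrC subrr.
  by rewrite /behind /ahead => [[[_ a1] [_ a2]]]; move: (lt_trans a1 a2); rewrite ltxx.
case: (eqVneq m n.+1) => [->|hmn']; first exact: htriv.
clear htriv.
have hmn2 : (m <= n)%N by move: hmn hmn'; rewrite leq_eqVlt => /orP [/eqP -> /eqP //|].
have hn : (1 <= n)%N by apply: leq_trans hm1 hmn2.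
have [IH1 IH2] := IH hn (ltnW hn1) m (introT andP (conj hm1 hmn2)).
move: IH1 IH2.
set u := b i; set w := b (ordS i).
set Bm := b (shift i m); set Bn := b (shift i n); set Bn1 := b (shift i n.+1).
move=> IH1 IH2.
have phi : forall j, 0 <= orient u w (b j) by move=> j; exact: hE.
have on : 0 <= orient u Bn Bn1.
  have := hE (shift i n) i; rewrite shift_ordS -/Bn -/Bn1 -/u orient_rot orient_rot //.
have Id : orient u Bm Bn1 * orient u w Bn =
   orient u Bn Bn1 * orient u w Bm + orient u Bm Bn * orient u w Bn1
  by rewrite /orient; ring.
rewrite /behind /ahead -/u -/w.
case: (ltrgtP (orient u w Bn) 0) => hBn.
- by move: (phi (shift i n)); rewrite -/Bn leNgt hBn.
- split.
    have : 0 <= orient u Bm Bn1 * orient u w Bn.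
      by rewrite Id addr_ge0 // mulr_ge0 // ?(phi (shift i m)) ?(phi (shift i n.+1)).
    by rewrite pmulr_lge0.
  move=> [_ [ho hp]].
  have eB := onL_pos hne ho.
  move: on; rewrite eB.
  have -> : orient u Bn (pos u w (prm u w Bn1)) = - prm u w Bn1 * orient u w Bn
    by rewrite /orient /pos /=; ring.
  by rewrite pmulr_lge0 // oppr_ge0 => hh; move: (lt_le_trans hp hh); rewrite ltxx.
- have eB := onL_pos hne hBn.
  set la := prm u w Bn in eB.
  case: (ltrgtP la 0) => hla.
  + have h1 : 0 <= la * orient u w Bn1.
      have <- : orient u Bn Bn1 = la * orient u w Bn1 by rewrite eB /orient /pos /=; ring.
      exact: on.
    have h2 : orient u w Bn1 = 0.
      apply/eqP; rewrite eq_le (phi (shift i n.+1)) andbT.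
      by move: h1; rewrite nmulr_rge0.
    have eB1 := onL_pos hne h2.
    set nu := prm u w Bn1 in eB1.
    case: (ltrP 0 nu) => hnu.
    * exfalso.
      have hd : 0 < nu - la by rewrite subr_gt0 (lt_trans hla hnu).
      apply: (Rlem (t := i) (j := shift i n) (tau := - la / (nu - la))).
      - by rewrite divr_gt0 // oppr_gt0.
      - by rewrite ltr_pdivrMr // mul1r -[X in X < _]add0r ltrD2r.
      - rewrite shift_ordS -/Bn -/Bn1 eB eB1 pos_pos.
        have -> : la + - la / (nu - la) * (nu - la) = 0 by rewrite mulfVK ?gt_eqF // subrr.
        by rewrite pos0.
    * split.
        have -> : orient u Bm Bn1 = - nu * orient u w Bm by rewrite eB1 /orient /pos /=; ring.
        by rewrite mulr_ge0 // ?oppr_ge0 // (phi (shift i m)).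
      by move=> [_ [_ hh]]; move: hh; rewrite ?ltNge ?hnu.
  + have e1 : orient u Bm Bn = - la * orient u w Bm by rewrite eB /orient /pos /=; ring.
    have h2 : orient u w Bm = 0.
      apply/eqP; rewrite eq_le (phi (shift i m)) andbT.
      by move: IH1; rewrite e1 nmulr_rge0 // oppr_lt0.
    have eBm := onL_pos hne h2.
    set mu := prm u w Bm in eBm.
    have hmu : 0 <= mu.
      rewrite leNgt; apply/negP => hmu; apply: IH2; split; split => //.
    split.
      have -> : orient u Bm Bn1 = mu * orient u w Bn1 by rewrite eBm /orient /pos /=; ring.
      by rewrite mulr_ge0 // (phi (shift i n.+1)).
    by move=> [[_ hh] _]; rewrite -/mu in hh; move: (lt_le_trans hh hmu); rewrite ltxx.
  + exfalso; apply: (@shift_neq i n); first by rewrite hn (ltnW hn1).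
    by apply: binj; rewrite -/Bn eB hla pos0.
Qed.

Lemma CL i m n : (m <= n <= k)%N -> 0 <= orient (b i) (b (shift i m)) (b (shift i n)).
Proof.
move=> /andP [h1 h2].
case: (eqVneq m 0%N) => [->|hm].
  by rewrite shift0 /orient; lra.
case: (eqVneq n k) => [->|hn].
  by rewrite shiftk /orient; lra.
have hnk : (n < k)%N by rewrite ltn_neqAle hn h2.
have hm1 : (1 <= m)%N by rewrite lt0n.
have [] := @CLstep i n (leq_trans hm1 h1) hnk m (introT andP (conj hm1 h1)) => //.
Qed.

Lemma shift_inj i a c : (a < k)%N -> (c < k)%N -> shift i a = shift i c -> a = c.
Proof.
move=> ha hc /(congr1 val) /=.
have hi := ltn_ord i.
case: (ltnP (i + a) k) => h1; case: (ltnP (i + c) k) => h2.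
- rewrite !modn_small //; lia.
- have -> : (i + c = (i + c - k) + k)%N by lia.
  rewrite modnDr !modn_small //; lia.
- have -> : (i + a = (i + a - k) + k)%N by lia.
  rewrite modnDr !modn_small //; lia.
- have -> : (i + a = (i + a - k) + k)%N by lia.
  have -> : (i + c = (i + c - k) + k)%N by lia.
  rewrite !modnDr !modn_small //; lia.
Qed.

Variable eps : R.
Hypothesis he0 : 0 <= eps.
Hypothesis he1 : eps < 1 / 2.
Notation bp := (Phi eps b).

Lemma e1p : 0 <= 1 - eps. Proof. have h := he1. have h0 := he0. lra. Qed.
Lemma e2p : 0 <= eps / 2. Proof. by rewrite divr_ge0. Qed.
Lemma e4p : 0 <= eps * eps / 4. Proof. by rewrite divr_ge0 // mulr_ge0. Qed.
Lemma c1p : 0 <= (1 - eps) * (1 - eps) - eps * eps / 4.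
Proof.
have h := he1; have h0 := he0.
have -> : (1 - eps) * (1 - eps) - eps * eps / 4 = (1 - 3 * eps / 2) * (1 - eps / 2) by field.
apply: mulr_ge0; lra.
Qed.

Lemma Xleft j d : (d <= k)%N -> d <> 1%N -> d <> 2%N ->
  0 <= orient (bp j) (bp (ordS j)) (b (shift (ord_pred j) d)).
Proof.
move=> hd hd1 hd2.
set i0 := ord_pred j.
have ej : j = shift i0 1 by rewrite shift1 ord_predK.
have ej1 : ordS j = shift i0 2 by rewrite ej shift_ordS.
have ej2 : ordS (ordS j) = shift i0 3 by rewrite ej1 shift_ordS.
have eP : bp j = Phi eps b j by [].
rewrite /Phi ordSK.
rewrite -/i0 ej2 ej1 ej.
set a := b i0; set u := b (shift i0 1); set v := b (shift i0 2); set w := b (shift i0 3).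
set X := b (shift i0 d).
have Id : orient
   (eps * (a.1 + v.1) / 2 + (1 - eps) * u.1, eps * (a.2 + v.2) / 2 + (1 - eps) * u.2)
   (eps * (u.1 + w.1) / 2 + (1 - eps) * v.1, eps * (u.2 + w.2) / 2 + (1 - eps) * v.2) X
  = eps * eps / 4 * orient a u X + eps / 2 * (1 - eps) * orient a v X
    + eps * eps / 4 * orient a w X + (1 - eps) * eps / 2 * orient u w X
    + ((1 - eps) * (1 - eps) - eps * eps / 4) * orient u v X
    + eps * eps / 4 * orient v w X.
  by rewrite /orient /=; field.
rewrite Id.
have e2 := e2p; have e1 := e1p; have e4 := e4p; have c1 := c1p.
have hX0 : forall Y, orient Y Y X = 0 by move=> Y; rewrite /orient !subrr !mul0r subrr.
have hau : 0 <= orient a u X by have := hE i0 (shift i0 d); rewrite -shift1.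
have huv : 0 <= orient u v X by have := hE (shift i0 1) (shift i0 d); rewrite shift_ordS.
have hvw : 0 <= orient v w X by have := hE (shift i0 2) (shift i0 d); rewrite shift_ordS.
have hd0 := nl4 hd1 hd2.
have hav : 0 <= orient a v X.
  case: hd0 => [e0|h3]; first by rewrite /X e0 shift0 -/a or_aba.
  by have := @CL i0 2 d; rewrite -/a -/v -/X; apply; rewrite hd (leq_trans _ h3).
have huw : 0 <= orient u w X.
  have -> : w = b (shift (shift i0 1) 2) by rewrite shift_shift.
  rewrite /u.
  case: hd0 => [e0|h3].
    have -> : X = b (shift (shift i0 1) (k.-1)).
      rewrite shift_shift /X e0 add1n prednK ?shiftk ?shift0 //; exact: kpos.
    by apply: CL; exact: nl1 hk.
  have -> : X = b (shift (shift i0 1) (d.-1)) by rewrite shift_shift /X add1n prednK // nl2.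
  by apply: CL; exact: nl3.
have haw : 0 <= orient a w X.
  case: (eqVneq k 3%N) => [k3|k3].
    by rewrite /w -k3 shiftk -/a or_aab.
  case: hd0 => [e0|h3]; first by rewrite /X e0 shift0 -/a or_aba.
  by rewrite /a /w /X; apply: CL; rewrite h3 hd.
have t1 := mulr_ge0 e4 hau.
have t2 := mulr_ge0 (mulr_ge0 e2 e1) hav.
have t3 := mulr_ge0 e4 haw.
have t4 := mulr_ge0 (mulr_ge0 e1 e2) huw.
have t5 := mulr_ge0 c1 huv.
have t6 := mulr_ge0 e4 hvw.
lra.
Qed.

Lemma CL2 i a c d : (c <= d)%N -> (d <= k)%N ->
  0 <= orient (b (shift i a)) (b (shift i (a + c))) (b (shift i (a + d))).
Proof. by move=> h1 h2; rewrite -!shift_shift; apply: CL; rewrite h1 h2. Qed.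

Lemma LT j : 0 <= orient (bp (ord_pred j)) (bp j) (bp (ordS j)).
Proof.
have h := he1; have h0 := he0.
case: (eqVneq k 3%N) => [k3|k3].
  have e3 : ordS (ordS (ordS j)) = j.
    have : shift j 3 = j by rewrite -k3 shiftk.
    by rewrite -!shift_ordS shift0.
  have e1 : ord_pred j = ordS (ordS j) by apply: ordS_inj; rewrite ord_predK e3.
  have e2 : ord_pred (ord_pred j) = ordS j by rewrite e1 ordSK.
  rewrite /Phi e2 ord_predK ordSK -e1.
  have hE' := hE (ord_pred j) (ordS j); rewrite ord_predK in hE'.
  move: hE'; set a := b (ord_pred j); set u := b j; set v := b (ordS j) => hE'.
  have -> : orient
   (eps * (v.1 + u.1) / 2 + (1 - eps) * a.1, eps * (v.2 + u.2) / 2 + (1 - eps) * a.2)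
   (eps * (a.1 + v.1) / 2 + (1 - eps) * u.1, eps * (a.2 + v.2) / 2 + (1 - eps) * u.2)
   (eps * (u.1 + a.1) / 2 + (1 - eps) * v.1, eps * (u.2 + a.2) / 2 + (1 - eps) * v.2)
   = (1 - 3 * eps / 2) * (1 - 3 * eps / 2) * orient a u v by rewrite /orient /=; field.
  by rewrite mulr_ge0 // -expr2 sqr_ge0.
have hk4 : (3 < k)%N by rewrite ltn_neqAle eq_sym k3 hk.
have k4 : (4 <= k)%N := hk4.
have k3' : (3 <= k)%N := ltnW hk4.
have k2 : (2 <= k)%N := ltnW k3'.
set i0 := shift j (k - 2).
have ej : j = shift i0 2 by rewrite /i0 shift_shift subnK ?shiftk //; apply: ltnW.
have ejm : ord_pred j = shift i0 1 by rewrite ej shift_pred.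
have ejp : ordS j = shift i0 3 by rewrite ej shift_ordS.
rewrite ejm ejp ej /Phi !shift_pred !shift_ordS.
set p1 := b (shift i0 0); set p2 := b (shift i0 1); set p3 := b (shift i0 2);
set p4 := b (shift i0 3); set p5 := b (shift i0 4).
have o123 : 0 <= orient p1 p2 p3 by apply: (CL2 i0 0 (c := 1) (d := 2)).
have o124 : 0 <= orient p1 p2 p4 by apply: (CL2 i0 0 (c := 1) (d := 3)).
have o125 : 0 <= orient p1 p2 p5 by apply: (CL2 i0 0 (c := 1) (d := 4)).
have o134 : 0 <= orient p1 p3 p4 by apply: (CL2 i0 0 (c := 2) (d := 3)).
have o135 : 0 <= orient p1 p3 p5 by apply: (CL2 i0 0 (c := 2) (d := 4)).
have o145 : 0 <= orient p1 p4 p5 by apply: (CL2 i0 0 (c := 3) (d := 4)).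
have o234 : 0 <= orient p2 p3 p4 by apply: (CL2 i0 1 (c := 1) (d := 2)).
have o235 : 0 <= orient p2 p3 p5 by apply: (CL2 i0 1 (c := 1) (d := 3)).
have o245 : 0 <= orient p2 p4 p5 by apply: (CL2 i0 1 (c := 2) (d := 3)).
have o345 : 0 <= orient p3 p4 p5 by apply: (CL2 i0 2 (c := 1) (d := 2)).
have -> : orient
   (eps * (p1.1 + p3.1) / 2 + (1 - eps) * p2.1, eps * (p1.2 + p3.2) / 2 + (1 - eps) * p2.2)
   (eps * (p2.1 + p4.1) / 2 + (1 - eps) * p3.1, eps * (p2.2 + p4.2) / 2 + (1 - eps) * p3.2)
   (eps * (p3.1 + p5.1) / 2 + (1 - eps) * p4.1, eps * (p3.2 + p5.2) / 2 + (1 - eps) * p4.2)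
  = eps^3 / 8 * (orient p1 p2 p3 + orient p1 p2 p5 + orient p1 p4 p5 + orient p3 p4 p5)
    + eps^2 * (1 - eps) / 4 * (orient p1 p2 p4 + orient p1 p3 p5 + orient p2 p4 p5)
    + eps / 2 * ((1 - eps / 2) * (1 - 3 * eps / 2)) * (orient p1 p3 p4 + orient p2 p3 p5)
    + (1 - eps) * (1 - 2 * eps + eps^2 / 2) * orient p2 p3 p4
  by rewrite /orient /=; field.
have c1 : 0 <= eps^3 / 8 by rewrite divr_ge0 // exprn_ge0.
have c2 : 0 <= eps^2 * (1 - eps) / 4 by rewrite divr_ge0 // mulr_ge0 ?exprn_ge0 //; lra.
have c3 : 0 <= eps / 2 * ((1 - eps / 2) * (1 - 3 * eps / 2)).
  by rewrite mulr_ge0 ?divr_ge0 // mulr_ge0 //; lra.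
have c4 : 0 <= (1 - eps) * (1 - 2 * eps + eps^2 / 2).
  rewrite mulr_ge0 //; first lra.
  have : 0 <= eps^2 / 2 by rewrite divr_ge0 // exprn_ge0.
  lra.
have s1 : 0 <= orient p1 p2 p3 + orient p1 p2 p5 + orient p1 p4 p5 + orient p3 p4 p5 by lra.
have s2 : 0 <= orient p1 p2 p4 + orient p1 p3 p5 + orient p2 p4 p5 by lra.
have s3 : 0 <= orient p1 p3 p4 + orient p2 p3 p5 by lra.
have t1 := mulr_ge0 c1 s1; have t2 := mulr_ge0 c2 s2; have t3 := mulr_ge0 c3 s3;
have t4 := mulr_ge0 c4 o234.
lra.
Qed.

Lemma bpconv j m : 0 <= orient (bp j) (bp (ordS j)) (bp m).
Proof.
have h := he1; have h0 := he0.
set i0 := ord_pred j.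
have [d hd em] := shift_all i0 m.
have ej : j = shift i0 1%N by rewrite shift1 ord_predK.
have hdk : (d <= k)%N by apply: ltnW.
case: (ltnP d 4) => hd4.
  have : d = 0%N \/ d = 1%N \/ d = 2%N \/ d = 3%N by lia.
  case=> [e0|[e1|[e2|e3]]].
  - rewrite em e0 shift0 /i0 orient_rot orient_rot; exact: LT.
  - by rewrite em e1 -ej or_aba.
  - by rewrite em e2 -shift_ordS -ej or_abb.
  - by have := LT (ordS j); rewrite ordSK ej !shift_ordS em e3.
rewrite em.
have Id : forall A B C : pt, orient (bp j) (bp (ordS j))
    (eps * (A.1 + C.1) / 2 + (1 - eps) * B.1, eps * (A.2 + C.2) / 2 + (1 - eps) * B.2)
  = (1 - eps) * orient (bp j) (bp (ordS j)) B + eps / 2 * orient (bp j) (bp (ordS j)) A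
    + eps / 2 * orient (bp j) (bp (ordS j)) C.
  by move=> A B C; rewrite /orient /=; field.
rewrite {3}/Phi Id.
have ed : d = d.-1.+1 by rewrite prednK //; apply: leq_trans hd4.
have hA : 0 <= orient (bp j) (bp (ordS j)) (b (ord_pred (shift i0 d))).
  rewrite ed shift_pred; apply: Xleft; lia.
have hB : 0 <= orient (bp j) (bp (ordS j)) (b (shift i0 d)) by apply: Xleft; lia.
have hC : 0 <= orient (bp j) (bp (ordS j)) (b (ordS (shift i0 d))).
  rewrite shift_ordS; apply: Xleft; lia.
have t1 := mulr_ge0 e1p hB; have t2 := mulr_ge0 e2p hA; have t3 := mulr_ge0 e2p hC.
lra.
Qed.

Lemma prod_neg (a c : R) : 0 <= a -> a * c < 0 -> c < 0.
Proof.
move=> ha hac; rewrite ltNge; apply/negP => hc.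
by move: hac; rewrite ltNge mulr_ge0.
Qed.

Lemma quadf j :
  0 <= orient (b j) (b (ordS j)) (bp (ordS j)) /\
  0 <= orient (b j) (b (ordS j)) (bp j) /\
  (0 <= orient (b j) (bp (ordS j)) (bp j) \/ 0 <= orient (b (ordS j)) (bp (ordS j)) (bp j)).
Proof.
have h := he1; have h0 := he0.
have al := hE j (ord_pred j).
have be := hE j (ordS (ordS j)).
have ga := hE (ord_pred j) (ordS (ordS j)); rewrite ord_predK in ga.
rewrite /Phi ordSK.
move: al be ga.
set a := b (ord_pred j); set u := b j; set v := b (ordS j); set w := b (ordS (ordS j)).
move=> al be ga.
set P := (eps * (a.1 + v.1) / 2 + (1 - eps) * u.1, eps * (a.2 + v.2) / 2 + (1 - eps) * u.2).
set Q := (eps * (u.1 + w.1) / 2 + (1 - eps) * v.1, eps * (u.2 + w.2) / 2 + (1 - eps) * v.2).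
have E1 : orient u v Q = eps / 2 * orient u v w by rewrite /orient /=; field.
have E2 : orient u v P = eps / 2 * orient u v a by rewrite /orient /=; field.
have E3 : orient u Q P = eps / 2 * ((1 - eps) * orient u v a + eps / 2 * orient a u w
   - eps / 2 * orient u v w) by rewrite /orient /=; field.
have E4 : orient v Q P = eps / 2 * (eps / 2 * orient a u w + (1 - eps / 2) * orient u v w
   - eps * orient u v a) by rewrite /orient /=; field.
have e2 := e2p.
split; first by rewrite E1 mulr_ge0.
split; first by rewrite E2 mulr_ge0.
rewrite E3 E4.
case: (eqVneq eps 0) => [->|hne]; first by left; rewrite mul0r mul0r.
have hep : 0 < eps / 2 by rewrite divr_gt0 // lt_def hne h0.
rewrite !pmulr_rge0 //.
set X := (1 - eps) * orient u v a + eps / 2 * orient a u w - eps / 2 * orient u v w.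
set Y := eps / 2 * orient a u w + (1 - eps / 2) * orient u v w - eps * orient u v a.
case: (lerP 0 X) => hX; first by left.
case: (lerP 0 Y) => hY; first by right.
exfalso.
have p1 : (1 - eps / 2) * X < 0 by rewrite pmulr_rlt0 //; lra.
have p2 : eps / 2 * Y < 0 by rewrite pmulr_rlt0.
have q1 : 0 <= orient u v a * (1 - 3 * eps / 2) by rewrite mulr_ge0 //; lra.
have q2 : 0 <= orient a u w * (eps / 2) by rewrite mulr_ge0.
have Id : (1 - eps / 2) * X + eps / 2 * Y
   = orient u v a * (1 - 3 * eps / 2) + orient a u w * (eps / 2)
  by rewrite /X /Y; field.
lra.
Qed.

Lemma notwist j : ~ twisted (b j) (b (ordS j)) (bp (ordS j)) (bp j).
Proof.
have [h1 [h2 h3]] := quadf j.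
move: h1 h2 h3.
set u := b j; set v := b (ordS j); set P := bp j; set Q := bp (ordS j).
move=> h1 h2 h3.
rewrite /twisted /proper_cross => [[[c1 _]|[c1 c2]]].
  by move: c1; rewrite ltNge mulr_ge0.
have n1 : orient v Q P < 0.
  apply: (prod_neg (a := orient v Q u)); first by rewrite -orient_rot.
  by rewrite mulrC.
have n2 : orient u Q P < 0.
  rewrite orient_rot orient_rot.
  apply: (prod_neg (a := orient P u v)); first by rewrite -2!orient_rot.
  by [].
by case: h3; rewrite leNgt ?n1 ?n2.
Qed.

Lemma wq_ge0 j x : 0 <= wind_quad (b j) (b (ordS j)) (bp (ordS j)) (bp j) x.
Proof.
have [h1 [h2 h3]] := quadf j.
move: h1 h2 h3.
set u := b j; set v := b (ordS j); set P := bp j; set Q := bp (ordS j).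
move=> h1 h2 h3.
case: h3 => h3.
  have -> : wind_quad u v Q P x = tri u v Q x + tri u Q P x.
    by rewrite /wind_quad /tri (we_anti u Q); ring.
  by rewrite addr_ge0 // tri_ge0.
have -> : wind_quad u v Q P x = tri u v P x + tri v Q P x.
  by rewrite /wind_quad /tri (we_anti v P); ring.
by rewrite addr_ge0 // tri_ge0.
Qed.

Lemma sum_wq x : \sum_(j < k) wind_quad (b j) (b (ordS j)) (bp (ordS j)) (bp j) x
   = Wn b x - Wn bp x.
Proof.
rewrite /wind_quad !big_split /=.
rewrite (sum_ordS (fun j => wind_edge (b j) (bp j) x)).
have -> : \sum_(j < k) wind_edge (bp (ordS j)) (bp j) x = - Wn bp x.
  by rewrite /Wn -sumrN; apply: eq_bigr => j _; rewrite we_anti.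
have -> : \sum_(j < k) wind_edge (bp j) (b j) x = - \sum_(j < k) wind_edge (b j) (bp j) x.
  by rewrite -sumrN; apply: eq_bigr => j _; rewrite we_anti.
rewrite /Wn; ring.
Qed.

Lemma overlap j j' x : j != j' ->
  ~ (quad_interior (b j) (b (ordS j)) (bp (ordS j)) (bp j) x /\
     quad_interior (b j') (b (ordS j')) (bp (ordS j')) (bp j') x).
Proof.
move=> hjj [[_ n1] [_ n2]].
have g1 := wq_ge0 j x; have g2 := wq_ge0 j' x.
have p1 : 1 <= wind_quad (b j) (b (ordS j)) (bp (ordS j)) (bp j) x.
  by rewrite -gtz0_ge1 lt_def n1.
have p2 : 1 <= wind_quad (b j') (b (ordS j')) (bp (ordS j')) (bp j') x.
  by rewrite -gtz0_ge1 lt_def n2.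
have hs := sum_wq x.
rewrite (bigD1 j) // (bigD1 j') /= 1?eq_sym // in hs.
have r : 0 <= \sum_(i < k | (i != j) && (i != j'))
    wind_quad (b i) (b (ordS i)) (bp (ordS i)) (bp i) x.
  by apply: sumr_ge0 => i _; apply: wq_ge0.
have w1 := Wb_le1 x.
have w2 : 0 <= Wn bp x by apply: Wn_ge0 => i m; apply: bpconv.
lra.
Qed.
End Conv.
End W.

Unset Implicit Arguments.

Theorem mainTheorem7 (R : realFieldType) (k : nat) (eps : R)
    (b : 'I_k -> (R * R)%type) :
  (3 <= k)%N -> 0 <= eps -> eps < 1 / 2 -> convex_ccw b ->
  let bp := Phi eps b in
  (forall j : 'I_k, ~ twisted (b j) (b (ordS j)) (bp (ordS j)) (bp j)) /\
  (forall j j' : 'I_k, j != j' -> forall x : R * R,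
     ~ (quad_interior (b j) (b (ordS j)) (bp (ordS j)) (bp j) x /\
        quad_interior (b j') (b (ordS j')) (bp (ordS j')) (bp j') x)).
Proof.
move=> hk he0 he1 [binj [hE hS]] bp; split.
  move=> j; exact: (notwist hE he0 he1).
move=> j j' hjj x; exact: (overlap hk binj hE hS he0 he1 hjj).
Qed.
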